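(* Let $R$ be an abelian ring and $\alpha$ a ring endomorphism of $R$. The following are equivalent: (1) $R$ is weakly $r$-clean; (2) the formal power series ring $R[[x]]$ is weakly $r$-clean; (3) the skew formal power series ring $R[[x;\alpha]]$ is weakly $r$-clean.
   Context: Rings are associative with identity; $R$ is abelian if all idempotents are central. $Idem(R)$ denotes idempotents and $Reg(R)=\{r: r=ryr \text{ for some } y\in R\}$ regular elements. An element is weakly $r$-clean if it equals $r+e$ or $r-e$ with $r\in Reg(R)$, $e\in Idem(R)$; a ring is weakly $r$-clean if all elements are. $R[[x;\alpha]]$ is the ring of formal power series $\sum_{i\ge0}a_ix^i$ with $a_i\in R$, with multiplication determined by $xr=\alpha(r)x$ for $r\in R$; $R[[x]]=R[[x;\mathrm{id}_R]]$. *)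

(* Defs.v *)
From HB Require Import structures.
From mathcomp Require Import all_boot all_order all_algebra.
Set Implicit Arguments. Unset Strict Implicit. Unset Printing Implicit Defensive.
Import GRing.Theory.
Local Open Scope ring_scope.

(** Weak r-cleanness, stated for a (carrier with) ring operations
    add / opp / mul, so that it applies uniformly to R and to the
    (skew) formal power series rings built below. *)
Section WeaklyRClean.
Variables (T : Type) (add : T -> T -> T) (opp : T -> T) (mul : T -> T -> T).

Definition is_idem (e : T) : Prop := mul e e = e.
Definition is_reg (r : T) : Prop := exists y, r = mul (mul r y) r.
Definition weakly_r_clean_elem (a : T) : Prop :=
  exists r e, is_reg r /\ is_idem e /\ (a = add r e \/ a = add r (opp e)).
Definition weakly_r_clean_ops : Prop := forall a : T, weakly_r_clean_elem a.
End WeaklyRClean.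

Definition weakly_r_clean (R : nzRingType) : Prop :=
  weakly_r_clean_ops (@GRing.add R) (@GRing.opp R) (@GRing.mul R).

Definition abelian_ring (R : nzRingType) : Prop :=
  forall e : R, e * e = e -> forall r : R, e * r = r * e.

(** Skew formal power series R[[x; alpha]]: a series sum_i a_i x^i is
    represented by its coefficient function nat -> R.  Multiplication is
    determined by x r = alpha(r) x, i.e.
    (a_i x^i)(b_j x^j) = a_i alpha^i(b_j) x^(i+j). *)
Definition pseries (R : nzRingType) := nat -> R.

Definition ps_add (R : nzRingType) (f g : pseries R) : pseries R :=
  fun n => f n + g n.
Definition ps_opp (R : nzRingType) (f : pseries R) : pseries R :=
  fun n => - f n.
Definition ps_mul (R : nzRingType) (alpha : R -> R) (f g : pseries R)
  : pseries R :=
  fun n => \sum_(i < n.+1) f i * iter i alpha (g (n - i)%N).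

Definition skew_ps_weakly_r_clean (R : nzRingType) (alpha : R -> R) : Prop :=
  weakly_r_clean_ops (@ps_add R) (@ps_opp R) (ps_mul alpha).

Definition ps_weakly_r_clean (R : nzRingType) : Prop :=
  skew_ps_weakly_r_clean (@id R).

(* Main.v *)
Require Import Defs.
From mathcomp Require Import all_boot all_order all_algebra.
From Stdlib Require Import FunctionalExtensionality.
Set Implicit Arguments. Unset Strict Implicit. Unset Printing Implicit Defensive.
Import GRing.Theory.
Local Open Scope ring_scope.

Section Aux.
Variable R : nzRingType.
Hypothesis Hab : abelian_ring R.

Lemma idem_compl (p : R) : p * p = p -> (1-p) * (1-p) = 1-p.
Proof. by move=> H; rewrite mulrBl mul1r mulrBr mulr1 H subrr subr0. Qed.
Lemma idem_orth (p : R) : p * p = p -> p * (1-p) = 0.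
Proof. by move=> H; rewrite mulrBr mulr1 H subrr. Qed.
Lemma idem_orth' (p : R) : p * p = p -> (1-p) * p = 0.
Proof. by move=> H; rewrite mulrBl mul1r H subrr. Qed.
Lemma sq_diff (p : R) : p * p = p -> (p - (1-p)) * (p - (1-p)) = 1.
Proof.
move=> H; rewrite mulrBl (mulrBr p) (mulrBr (1-p)) H idem_orth // idem_orth' // idem_compl //.
by rewrite subr0 sub0r opprK addrC subrK.
Qed.
Lemma sq_diff' (p : R) : p * p = p -> ((1-p) - p) * ((1-p) - p) = 1.
Proof.
move=> H; have -> : (1 - p) - p = - (p - (1 - p)) by rewrite opprB.
by rewrite mulrNN sq_diff.
Qed.

Lemma idemM (x y : R) : x * x = x -> y * y = y -> (forall u, x * u = u * x) ->
  (x * y) * (x * y) = x * y.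
Proof.
move=> Hx Hy Hc.
by rewrite -mulrA (mulrA y x y) -(Hc y) -mulrA Hy mulrA Hx.
Qed.

Lemma idemD (x y : R) : x * x = x -> y * y = y -> x * y = 0 -> y * x = 0 ->
  (x+y) * (x+y) = x+y.
Proof.
by move=> Hx Hy Hxy Hyx; rewrite mulrDl !mulrDr Hx Hy Hxy Hyx addr0 add0r.
Qed.

Lemma wc (a : R) : weakly_r_clean R -> exists E c w,
  E * E = E /\ c * w = 1 /\ (a = c + E \/ a = c - E).
Proof.
move=> /(_ a) [r [e [[y Hy] [He Hd]]]].
rewrite /is_idem in He.
set z := y * r * y.
have Hrzr : r * z * r = r by rewrite /z !mulrA -!Hy.
have Hzrz : z * r * z = z.
  rewrite /z. transitivity (y * (r * y * r) * (y * r * y)); first by rewrite !mulrA.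
  rewrite -Hy. transitivity (y * (r * y * r) * y); first by rewrite !mulrA.
  by rewrite -Hy.
set g := r * z.
have Hg : g * g = g by rewrite /g mulrA Hrzr.
have gc := Hab Hg.
have Hrg : r * g = r by rewrite -gc /g Hrzr.
have Hzg : z * g = z by rewrite /g mulrA Hzrz.
set f := 1 - g.
have Hf : f * f = f by rewrite /f idem_compl.
have fc := Hab Hf.
have Hrf : r * f = 0 by rewrite /f mulrBr mulr1 Hrg subrr.
have Hzf : z * f = 0 by rewrite /f mulrBr mulr1 Hzg subrr.
have ec := Hab He.
set q := 1 - e.
have Hq : q * q = q by rewrite /q idem_compl.
have qc := Hab Hq.
have Hgf : g * f = 0 by rewrite /f idem_orth.
have Hfg : f * g = 0 by rewrite /f idem_orth'.
set E := g * e + f * q.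
have HE : E * E = E.
  apply: idemD.
  - exact: idemM.
  - exact: idemM.
  - by rewrite mulrA -(mulrA g e f) -(fc e) mulrA Hgf !mul0r.
  - by rewrite mulrA -(mulrA f q g) -(gc q) mulrA Hfg !mul0r.
have key : forall t, t * t = 1 -> (forall u, t * u = u * t) ->
    (r + f * t) * (z + f * t) = 1.
  move=> t Ht tc.
  rewrite mulrDl !mulrDr.
  rewrite (mulrA r f t) Hrf mul0r.
  rewrite -(mulrA f t z) (tc z) mulrA (fc z) Hzf mul0r.
  rewrite -(mulrA f t) (mulrA t f t) -(fc t) -mulrA Ht mulr1 mulrA Hf.
  rewrite addr0 add0r; have -> : r * (y * r) * y = g by rewrite /g /z !mulrA.
  by rewrite /f addrC subrK.
have tc1 : forall u, (e - q) * u = u * (e - q).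
  by move=> u; rewrite mulrBl mulrBr ec qc.
have tc2 : forall u, (q - e) * u = u * (q - e).
  by move=> u; rewrite mulrBl mulrBr ec qc.
case: Hd => Ha.
- exists E, (r + f * (e - q)), (z + f * (e-q)); split => //; split.
    by apply: key => //; exact: sq_diff.
  left; rewrite Ha /E mulrBr -addrA; congr (r + _).
  by rewrite [g * e + _]addrC addrA subrK -mulrDl /f subrK mul1r.
- exists E, (r + f * (q - e)), (z + f * (q-e)); split => //; split.
    by apply: key => //; exact: sq_diff'.
  right; rewrite Ha /E mulrBr -!addrA; congr (r + _).
  by rewrite addrC -addrA opprD subrK -opprD -mulrDl /f subrK mul1r.
Qed.

End Aux.

Section Series.
Variable R : nzRingType.
Variable alpha : R -> R.

Definition cst (E : R) : pseries R := fun n => if n is 0 then E else 0.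

Lemma ps_mul0 (f g : pseries R) : ps_mul alpha f g 0 = f 0%N * g 0%N.
Proof. by rewrite /ps_mul big_ord1. Qed.

Lemma ps_mulS (f g : pseries R) n : ps_mul alpha f g n.+1 =
  f 0%N * g n.+1 + \sum_(i < n.+1) f i.+1 * iter i.+1 alpha (g (n - i)%N).
Proof. by rewrite /ps_mul big_ord_recl /=. Qed.

Lemma cst_idem E : E * E = E -> ps_mul alpha (cst E) (cst E) = cst E.
Proof.
move=> HE; apply: functional_extensionality => -[|n].
  by rewrite ps_mul0.
by rewrite ps_mulS big1 ?mulr0 ?addr0 // => i _; rewrite mul0r.
Qed.

Lemma one_mul (s : pseries R) : ps_mul alpha (cst 1) s = s.
Proof.
apply: functional_extensionality => -[|n].
  by rewrite ps_mul0 mul1r.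
by rewrite ps_mulS big1 ?addr0 ?mul1r // => i _; rewrite mul0r.
Qed.

Section Inv.
Variables (s : pseries R) (w : R).
Hypothesis Hw : s 0%N * w = 1.

Fixpoint Yf (n : nat) : nat -> R :=
  match n with
  | 0 => fun _ => w
  | n'.+1 => fun k => if (k <= n')%N then Yf n' k
      else - (w * \sum_(i < n'.+1) s i.+1 * iter i.+1 alpha (Yf n' (n' - i)%N))
  end.

Lemma Yf_stable n k : (k <= n)%N -> Yf n k = Yf k k.
Proof.
elim: n k => [|n IH] k Hk.
  by move: Hk; rewrite leqn0 => /eqP ->.
case: (leqP k n) => Hkn.
  by rewrite /= Hkn IH.
have -> : k = n.+1 by apply/eqP; rewrite eqn_leq Hk Hkn.
done.
Qed.

Definition yinv : pseries R := fun k => Yf k k.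

Lemma yinv_spec : ps_mul alpha s yinv = cst 1.
Proof.
apply: functional_extensionality => -[|n].
  by rewrite ps_mul0.
rewrite ps_mulS /= /yinv /= ltnn.
under eq_bigr => i _ do rewrite (@Yf_stable n (n - i)%N) ?leq_subr // -/(yinv (n - i)%N).
by rewrite /yinv mulrN mulrA Hw mul1r addNr.
Qed.

Lemma reg_of_inv : is_reg (ps_mul alpha) s.
Proof. by exists yinv; rewrite yinv_spec one_mul. Qed.
End Inv.

Lemma equiv_skew : abelian_ring R ->
  (weakly_r_clean R <-> skew_ps_weakly_r_clean alpha).
Proof.
move=> Hab; split.
- move=> Hwc f.
  have [E [c [w [HE [Hcw Hd]]]]] := wc Hab (f 0%N) Hwc.
  case: Hd => Ha.
  + exists (ps_add f (ps_opp (cst E))), (cst E); split.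
      apply: (@reg_of_inv _ w).
      by rewrite /ps_add /ps_opp /= Ha addrK.
    split; first exact: cst_idem.
    left; apply: functional_extensionality => n.
    by rewrite /ps_add /ps_opp subrK.
  + exists (ps_add f (cst E)), (cst E); split.
      apply: (@reg_of_inv _ w).
      by rewrite /ps_add /= Ha subrK.
    split; first exact: cst_idem.
    right; apply: functional_extensionality => n.
    by rewrite /ps_add /ps_opp addrK.
- move=> H a.
  have [r [e [[y Hy] [He Hd]]]] := H (cst a).
  exists (r 0%N), (e 0%N); split.
    exists (y 0%N).
    by have := congr1 (fun h => h 0%N) Hy; rewrite /= !ps_mul0.
  split.
    by have := congr1 (fun h => h 0%N) He; rewrite /= ps_mul0.
  case: Hd => Hd; [left|right];
    by have := congr1 (fun h => h 0%N) Hd.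
Qed.

End Series.

Theorem proposition2p12 (R : nzRingType) (alpha : {rmorphism R -> R}) :
  abelian_ring R ->
  (weakly_r_clean R <-> ps_weakly_r_clean R) /\
  (ps_weakly_r_clean R <-> skew_ps_weakly_r_clean alpha).
Proof.
move=> Hab.
have H1 := equiv_skew (@id R) Hab.
have H2 := equiv_skew alpha Hab.
rewrite /ps_weakly_r_clean; tauto.
Qed.
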